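(* Let $A$ be a vector space with bilinear operations $\star,\circ$; $x\cdot y=x\star y+y\star x$, $[x,y]=x\circ y-y\circ x$. (1) If $(A,\cdot,[-,-])$ is a transposed Poisson algebra, $(A,\star)$ is Zinbiel, $(A,\circ)$ is pre-Lie, and $(-\mathcal{L}^*_{\star},\mathcal{L}^*_{\circ},A^* )$ is a representation of $(A,\cdot,[-,-])$, then $(A,\star,\circ)$ is a TZPD algebra. (2) Conversely, if $(A,\star,\circ)$ is a TZPD algebra then $(A,\cdot,[-,-])$ is a transposed Poisson algebra with representation $(-\mathcal{L}^*_{\star},\mathcal{L}^*_{\circ},A^* )$.
   Context: Finite-dimensional spaces, characteristic zero. $\mathcal{L}_\ast(x)y=x\ast y$; for linear $\rho:A\to\mathrm{End}(V)$, $\langle\rho^*(x)v^*,u\rangle=-\langle v^*,\rho(x)u\rangle$. Zinbiel: $x\star(y\star z)=(x\star y)\star z+(y\star x)\star z$. Pre-Lie: $(x\circ y)\circ z-x\circ(y\circ z)=(y\circ x)\circ z-y\circ(x\circ z)$. Transposed Poisson algebra: $(A,\cdot)$ commutative associative, $(A,[-,-])$ Lie, $2z\cdot[x,y]=[z\cdot x,y]+[x,z\cdot y]$. A representation of a transposed Poisson algebra is $(\mu,\rho,V)$ with $\mu(x\cdot y)=\mu(x)\mu(y)$, $\rho([x,y])=[\rho(x),\rho(y)]$, $2\mu(x)\rho(y)=\rho(x\cdot y)+\rho(y)\mu(x)$, $2\mu([x,y])=\rho(x)\mu(y)-\rho(y)\mu(x)$. A TZPD algebra is $(A,\star,\circ)$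 with $(A,\star)$ Zinbiel, $(A,\circ)$ pre-Lie, and for all $x,y,z$: $2y\circ(x\star z)=(x\star y+y\star x)\circ z+x\star(y\circ z)$; $2(x\circ y-y\circ x)\star z=x\star(y\circ z)-y\star(x\circ z)$; $y\circ(x\star z+z\star x)-x\circ(y\star z+z\star y)+z\star(x\circ y-y\circ x)=0$. *)

(* Defs.v *)
From HB Require Import structures.
From mathcomp Require Import all_boot all_order all_algebra.
Set Implicit Arguments. Unset Strict Implicit. Unset Printing Implicit Defensive.
Import GRing.Theory.
Local Open Scope ring_scope.

Section Defs.
Variables (K : fieldType) (A : vectType K).

Definition bilinear_op (op : A -> A -> A) : Prop :=
  (forall x, linear (op x)) /\ (forall y, linear (fun x => op x y)).

Definition sym_op (s : A -> A -> A) : A -> A -> A := fun x y => s x y + s y x.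
Definition skew_op (c : A -> A -> A) : A -> A -> A := fun x y => c x y - c y x.

Definition zinbiel (s : A -> A -> A) : Prop :=
  forall x y z, s x (s y z) = s (s x y) z + s (s y x) z.

Definition preLie (c : A -> A -> A) : Prop :=
  forall x y z, c (c x y) z - c x (c y z) = c (c y x) z - c y (c x z).

Definition is_TPA (m b : A -> A -> A) : Prop :=
  [/\ bilinear_op m, bilinear_op b,
      (forall x y, m x y = m y x) /\ (forall x y z, m (m x y) z = m x (m y z)),
      (forall x, b x x = 0) /\
        (forall x y z, b x (b y z) + b y (b z x) + b z (b x y) = 0) &
      forall x y z, (m z (b x y)) *+ 2 = b (m z x) y + b x (m z y)].

Definition is_TPA_rep (m b : A -> A -> A) (V : lmodType K)
  (mu rho : A -> V -> V) : Prop :=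
  [/\ (forall x, linear (mu x)) /\ (forall x, linear (rho x)),
      (forall (a : K) x y v, mu (a *: x + y) v = a *: mu x v + mu y v) /\
      (forall (a : K) x y v, rho (a *: x + y) v = a *: rho x v + rho y v),
      (forall x y v, mu (m x y) v = mu x (mu y v)) /\
      (forall x y v, rho (b x y) v = rho x (rho y v) - rho y (rho x v)),
      (forall x y v, (mu x (rho y v)) *+ 2 = rho (m x y) v + rho y (mu x v)) &
      (forall x y v, (mu (b x y) v) *+ 2 = rho x (mu y v) - rho y (mu x v))].

(* The dual space A^* = 'Hom(A, K^o), and the dual of the left multiplication
   operator L_op : <L_op^*(x) f, u> = - <f, op x u>. *)
Definition dualL (op : A -> A -> A) (x : A) (f : 'Hom(A, K^o)) : 'Hom(A, K^o) :=
  linfun (fun u : A => - f (op x u)).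

Definition negDualL (op : A -> A -> A) (x : A) (f : 'Hom(A, K^o)) : 'Hom(A, K^o) :=
  - dualL op x f.

Definition TZPD (s c : A -> A -> A) : Prop :=
  [/\ zinbiel s, preLie c,
      (forall x y z, (c y (s x z)) *+ 2 = c (s x y + s y x) z + s x (c y z)),
      (forall x y z, (s (c x y - c y x) z) *+ 2 = s x (c y z) - s y (c x z)) &
      (forall x y z, c y (s x z + s z x) - c x (s y z + s z y)
                     + s z (c x y - c y x) = 0)].

End Defs.

(* Main.v *)
Require Import Defs.
From HB Require Import structures.
From mathcomp Require Import all_boot all_order all_algebra.
From mathcomp Require Import ring.
Import GRing.Theory.
Local Open Scope ring_scope.

Section Aux.
Context {K : fieldType} {A : vectType K}.

Lemma linD {V : lmodType K} {g : A -> V} : linear g -> forall a b, g (a + b) = g a + g b.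
Proof. by move=> H; case: (GRing.semilinear_linear H). Qed.
Lemma linZ {V : lmodType K} {g : A -> V} : linear g -> forall (k : K) a, g (k *: a) = k *: g a.
Proof. by move=> H; case: (GRing.semilinear_linear H). Qed.
Lemma linN {V : lmodType K} {g : A -> V} : linear g -> forall a, g (- a) = - g a.
Proof. by move=> H a; rewrite -[- a]scaleN1r (linZ H) scaleN1r. Qed.

Lemma opDl {op : A -> A -> A} : bilinear_op op -> forall a b c, op (a + b) c = op a c + op b c.
Proof. by case=> _ H a b c; rewrite (linD (H c)). Qed.
Lemma opDr {op : A -> A -> A} : bilinear_op op -> forall a b c, op c (a + b) = op c a + op c b.
Proof. by case=> H _ a b c; rewrite (linD (H c)). Qed.
Lemma opNl {op : A -> A -> A} : bilinear_op op -> forall a c, op (- a) c = - op a c.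
Proof. by case=> _ H a c; rewrite (linN (H c)). Qed.
Lemma opNr {op : A -> A -> A} : bilinear_op op -> forall a c, op c (- a) = - op c a.
Proof. by case=> H _ a c; rewrite (linN (H c)). Qed.
Lemma opZl {op : A -> A -> A} : bilinear_op op -> forall (k : K) a c, op (k *: a) c = k *: op a c.
Proof. by case=> _ H k a c; rewrite (linZ (H c)). Qed.
Lemma opZr {op : A -> A -> A} : bilinear_op op -> forall (k : K) a c, op c (k *: a) = k *: op c a.
Proof. by case=> H _ k a c; rewrite (linZ (H c)). Qed.

Lemma linfunE' (g : A -> K^o) : linear g -> forall u, linfun g u = g u.
Proof.
move=> H u.
pose gl : {linear A -> K^o} := HB.pack g (GRing.isLinear.Build K A K^o *:%R g H).
exact: (lfunE gl u).
Qed.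

Lemma sep (u v : A) : (forall f : 'Hom(A, K^o), f u = f v) -> u = v.
Proof.
move=> H; rewrite (coord_vbasis (memvf u)) (coord_vbasis (memvf v)).
apply: eq_bigr => i _; congr (_ *: _).
by have := H (linfun (coord (vbasis fullv) i : A -> K^o)); rewrite !lfunE.
Qed.

Lemma dual_lin {op : A -> A -> A} : bilinear_op op -> forall x (f : 'Hom(A, K^o)), linear (fun u => - f (op x u)).
Proof.
move=> Hop x f k a b /=.
by rewrite (opDr Hop) (opZr Hop) linearD linearZ opprD scalerN.
Qed.

Lemma dualLE {op : A -> A -> A} : bilinear_op op -> forall x f u, dualL op x f u = - f (op x u).
Proof. by move=> Hop x f u; rewrite /dualL linfunE' //; apply: dual_lin. Qed.

Lemma negDualLE {op : A -> A -> A} : bilinear_op op -> forall x f u, negDualL op x f u = f (op x u).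
Proof. by move=> Hop x f u; rewrite /negDualL opp_lfunE dualLE // opprK. Qed.

Lemma toz {V : zmodType} {a b : V} : a = b -> a - b = 0.
Proof. by move->; rewrite subrr. Qed.

Lemma lcM {R : idomainType} (c : R) {a b e : R} :
  c != 0 -> e = 0 -> c * (a - b) = e -> a = b.
Proof.
move=> c0 -> /eqP; rewrite mulf_eq0 (negbTE c0) /= subr_eq0 => /eqP //.
Qed.

Lemma lcL {V : zmodType} {a b e : V} : e = 0 -> a - b = e -> a = b.
Proof. by move=> -> /eqP; rewrite subr_eq0 => /eqP. Qed.

End Aux.

Ltac norm Hs Hc f :=
  rewrite /sym_op /skew_op ?mulr2n
    ?(opDl Hs, opDr Hs, opNl Hs, opNr Hs, opZl Hs, opZr Hs,
      opDl Hc, opDr Hc, opNl Hc, opNr Hc, opZl Hc, opZr Hc)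
    ?(linearD f) ?(linearN f) ?(linearZ f).
Ltac normh Hs Hc f h :=
  rewrite /sym_op /skew_op ?mulr2n
    ?(opDl Hs, opDr Hs, opNl Hs, opNr Hs, opZl Hs, opZr Hs,
      opDl Hc, opDr Hc, opNl Hc, opNr Hc, opZl Hc, opZr Hc)
    ?(linearD f) ?(linearN f) ?(linearZ f) in h.
Ltac getd h := lazymatch type of h with ?d = 0 => d end.
Ltac lc1 h := let d := getd h in
  first [ apply: (lcL (e := d)); [by rewrite h | ring]
        | apply: (lcL (e := -1 * d)); [by rewrite h; ring | ring] ].

Theorem mainTheorem18 (K : fieldType) (A : vectType K)
  (star circ : A -> A -> A) :
  [pchar K] =i pred0 ->
  bilinear_op star -> bilinear_op circ ->
  ((is_TPA (sym_op star) (skew_op circ) /\ zinbiel star /\ preLie circ /\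
    is_TPA_rep (sym_op star) (skew_op circ) (negDualL star) (dualL circ))
     -> TZPD star circ)
  /\
  (TZPD star circ ->
     is_TPA (sym_op star) (skew_op circ) /\
     is_TPA_rep (sym_op star) (skew_op circ) (negDualL star) (dualL circ)).
Proof.
move=> ch Hs Hc.
split.
- case=> TPA [Zs [PL Rep]].
  case: Rep => _ _ _ R4 R5.
  have T3 : forall x y z, circ y (star x z) *+ 2 = circ (star x y + star y x) z + star x (circ y z).
  { move=> x y z; apply: sep => f.
    have h := congr1 (fun g : 'Hom(A,K^o) => g z) (R4 x y f).
    rewrite /= mulr2n !add_lfunE !(negDualLE Hs) !(dualLE Hc) ?(negDualLE Hs) in h.
    have {}h := toz h. normh Hs Hc f h.
    norm Hs Hc f.
    let d := getd h in apply: (lcL (e := -1 * d)). by rewrite h; ring. ring. }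
  have T4 : forall x y z, star (circ x y - circ y x) z *+ 2 = star x (circ y z) - star y (circ x z).
  { move=> x y z; apply: sep => f.
    have h := congr1 (fun g : 'Hom(A,K^o) => g z) (R5 x y f).
    rewrite /= mulr2n !add_lfunE !opp_lfunE !(dualLE Hs) !(dualLE Hc) !(negDualLE Hs) in h.
    have {}h := toz h. normh Hs Hc f h.
    norm Hs Hc f. lc1 h. }
  case: TPA => _ _ _ _ Cp.
  have three : (3 : K) != 0 by rewrite ((pcharf0P K).1 ch 3).
  split => //.
  move=> x y z; apply: sep => f.
  have h1 := toz (congr1 f (T3 x y z)). normh Hs Hc f h1.
  have h2 := toz (congr1 f (T3 y x z)). normh Hs Hc f h2.
  have h3 := toz (congr1 f (T3 z x y)). normh Hs Hc f h3.
  have h4 := toz (congr1 f (T3 z y x)). normh Hs Hc f h4.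
  have h5 := toz (congr1 f (T4 x y z)). normh Hs Hc f h5.
  have h6 := toz (congr1 f (Cp x y z)). normh Hs Hc f h6.
  norm Hs Hc f. rewrite linear0.
  let d1 := getd h1 in let d2 := getd h2 in let d3 := getd h3 in
  let d4 := getd h4 in let d5 := getd h5 in let d6 := getd h6 in
  apply: (@lcM K 3 _ _ (d1 - d2 - d3 + d4 - d5 + d6) three);
    [by rewrite h1 h2 h3 h4 h5 h6; ring | ring].
- case=> Zs PL T3 T4 T5.
  split.
  + split.
    * split => y k a b /=; apply: sep => f; norm Hs Hc f; ring.
    * split => y k a b /=; apply: sep => f; norm Hs Hc f; ring.
    * split => x y; first by rewrite /sym_op addrC.
      move=> z; apply: sep => f.
      have h1 := toz (congr1 f (Zs x y z)). normh Hs Hc f h1.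
      have h2 := toz (congr1 f (Zs x z y)). normh Hs Hc f h2.
      have h3 := toz (congr1 f (Zs z x y)). normh Hs Hc f h3.
      have h4 := toz (congr1 f (Zs z y x)). normh Hs Hc f h4.
      norm Hs Hc f.
      let d1 := getd h1 in let d2 := getd h2 in let d3 := getd h3 in
      let d4 := getd h4 in
      apply: (lcL (e := - d1 - d2 + d3 + d4));
        [by rewrite h1 h2 h3 h4; ring | ring].
    * split => [x|x y z]; first by rewrite /skew_op subrr.
      apply: sep => f.
      have h1 := toz (congr1 f (PL x y z)). normh Hs Hc f h1.
      have h2 := toz (congr1 f (PL x z y)). normh Hs Hc f h2.
      have h3 := toz (congr1 f (PL y z x)). normh Hs Hc f h3.
      norm Hs Hc f. rewrite linear0.
      let d1 := getd h1 in let d2 := getd h2 in let d3 := getd h3 in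
      apply: (lcL (e := - d1 + d2 - d3));
        [by rewrite h1 h2 h3; ring | ring].
    * move=> x y z; apply: sep => f.
      have h1 := toz (congr1 f (T3 x y z)). normh Hs Hc f h1.
      have h2 := toz (congr1 f (T3 y x z)). normh Hs Hc f h2.
      have h3 := toz (congr1 f (T3 z x y)). normh Hs Hc f h3.
      have h4 := toz (congr1 f (T3 z y x)). normh Hs Hc f h4.
      have h5 := toz (congr1 f (T4 x y z)). normh Hs Hc f h5.
      have h6 := toz (congr1 f (T5 x y z)). normh Hs Hc f h6.
      norm Hs Hc f.
      let d1 := getd h1 in let d2 := getd h2 in let d3 := getd h3 in
      let d4 := getd h4 in let d5 := getd h5 in let d6 := getd h6 in
      apply: (lcL (e := - d1 + d2 + d3 - d4 + d5 + 3 * d6));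
        [by rewrite h1 h2 h3 h4 h5 h6; ring | ring].
  + split.
    * split => x k g1 g2; apply/lfunP => u;
        rewrite ?add_lfunE ?scale_lfunE ?(negDualLE Hs) ?(dualLE Hc)
                ?add_lfunE ?scale_lfunE; ring.
    * split => k x y v; apply/lfunP => u;
        rewrite ?add_lfunE ?scale_lfunE ?(negDualLE Hs) ?(dualLE Hc);
        norm Hs Hc v; rewrite ?linearZ; ring.
    * split => x y v; apply/lfunP => u.
      - rewrite ?(negDualLE Hs).
        have h := toz (congr1 v (Zs y x u)). normh Hs Hc v h.
        norm Hs Hc v. lc1 h.
      - rewrite ?add_lfunE ?opp_lfunE ?(dualLE Hc) opprK.
        have h := toz (congr1 v (PL x y u)). normh Hs Hc v h.
        norm Hs Hc v. lc1 h.
    * move=> x y v; apply/lfunP => u.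
      rewrite mulr2n ?add_lfunE ?(negDualLE Hs) ?(dualLE Hc) ?(negDualLE Hs).
      have h := toz (congr1 v (T3 x y u)). normh Hs Hc v h.
      norm Hs Hc v. lc1 h.
    * move=> x y v; apply/lfunP => u.
      rewrite mulr2n ?add_lfunE ?opp_lfunE ?(dualLE Hs) ?(negDualLE Hs) ?(dualLE Hc) ?(negDualLE Hs).
      have h := toz (congr1 v (T4 x y u)). normh Hs Hc v h.
      norm Hs Hc v. lc1 h.
Qed.
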